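(* Let $\mathcal{T}^{pl}$ be the vector space spanned by the set $T^{pl}$ of planar rooted trees, $\mathcal{T}$ the vector space spanned by the set $T$ of (non-planar) rooted trees, $\pi:\mathcal{T}^{pl}\to\mathcal{T}$ the linear ''forget planarity'' projection, and $\Psi:\mathcal{T}^{pl}\to\mathcal{T}^{pl}$ the linear map with $\Psi(\bullet)=\bullet$ and $\Psi(\sigma_1\circ\!\!\searrow\sigma_2)=\Psi(\sigma_1)\searrow\Psi(\sigma_2)$ for all planar rooted trees $\sigma_1,\sigma_2$. Put $\overline{\Psi}=\pi\circ\Psi$. Then for every planar rooted tree $\tau$, $$\overline{\Psi}(\tau)=\sum_{s\in T}\alpha(s,\tau)\,s,$$ where the coefficients $\alpha(s,\tau)$ are nonnegative integers, and $$\alpha(s,\tau)=\overline{b}(s,\tau):=\frac{\tilde b(s,\tau)}{sym(s)},$$ where $sym(s)$ is the symmetry factor of $s$ and $\tilde b(s,\tau)$ is the number of bijections $\varphi:V(s)\to V(\tau)$ which are increasing from $(V(s),<)$ into $(V(\tau),\lll)$ and such that $\varphi^{-1}$ is increasing from $(V(\tau),<)$ into $(V(s),<)$.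
   Context: A rooted tree is a finite oriented tree with a distinguished vertex (the root) having no outgoing edge, every other vertex having exactly one outgoing edge; it is planar if endowed with an embedding in the plane (so the branches at each vertex are ordered left to right). $\bullet$ denotes the one-vertex tree. $V(\sigma)$ is the vertex set of a tree $\sigma$. Every planar rooted tree is $B_+(\tau_1\cdots\tau_k)$, obtained by connecting the roots of the ordered list of planar trees $\tau_1,\dots,\tau_k$ to a new root. The left Butcher product is $\sigma\circ\!\!\searrow\tau:=B_+(\sigma\tau_1\cdots\tau_k)$ when $\tau=B_+(\tau_1\cdots\tau_k)$ (graft the root of $\sigma$ as the new leftmost branch at the root of $\tau$); every planar rooted tree with at least two vertices is uniquely of the form $\sigma_1\circ\!\!\searrow\sigma_2$, so $\Psi$ is well defined recursively. The left grafting is the bilinear product $\sigma\searrow\tau=\sum_{v\in V(\tau)}\sigma\searrow_v\tau$, where $\sigma\searrow_v\tau$ is obtained by grafting the root of $\sigma$ onto the vertex $v$ of $\tau$ so that $\sigma$ becomes the leftmost branch at $v$. Partial order $<$ on the vertices of a tree: $v<w$ if $v\neq w$ and the path from the root to $w$ passes through $v$. Total order $\lll$ on $V(\tau)$ for a planar tree $\tau$, defined recursively: for $\tau=\tau_1\circ\!\!\searrow\tau_2$, $v\lll w$ iff ($v\lll w$ inside $V(\tau_1)$ or inside $V(\tau_2)$) or ($v\in V(\tau_2)$ and $w\in V(\tau_1)$). A map $f$ is increasing from $(A,\prec_A)$ into $(B,\prec_B)$ if $a\prec_A a'$ implies $f(a)\prec_B f(a')$. The symmetry factor $sym(s)$ of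 a non-planar rooted tree $s$ is the number of bijections $V(s)\to V(s)$ which are increasing from $(V(s),<)$ onto $(V(s),<)$ (i.e. tree automorphisms). *)

(* Defs.v *)
From mathcomp Require Import all_boot all_order all_algebra.
Set Implicit Arguments. Unset Strict Implicit. Unset Printing Implicit Defensive.

Inductive ptree := Node of seq ptree.

Definition bullet : ptree := Node [::].

(* Left Butcher product: s o\ Node l = Node (s :: l).  Every tree with >= 2
   vertices is uniquely  c o\ Node cs  when it is Node (c :: cs). *)
Definition lbutcher (s t : ptree) : ptree := let: Node l := t in Node (s :: l).

(* Vertices are addressed by paths from the root: [::] is the root, and
   i :: p is vertex p of the i-th (0-based, from the left) branch. *)
Definition address := seq nat.

Definition shift_addr (p : address) : address :=
  if p is i :: q then i.+1 :: q else [::].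

(* The vertices of a planar tree listed in the total order <<< , following the
   recursive definition: for tau = tau1 o\ tau2, first the vertices of tau2,
   then those of tau1 (each internally ordered recursively).  For
   tau = Node (c :: cs): tau1 = c (addresses 0 :: p), tau2 = Node cs (its
   address i :: q corresponds to i.+1 :: q in tau, its root to the root). *)
Fixpoint verts (t : ptree) : seq address :=
  let fix go (l : seq ptree) : seq address :=
    if l is c :: cs then map shift_addr (go cs) ++ map (cons 0) (verts c)
    else [:: [::]] in
  let: Node l := t in go l.

Fixpoint graft_at (s t : ptree) (p : address) {struct p} : ptree :=
  let: Node l := t in
  match p with
  | [::] => Node (s :: l)
  | i :: p' => Node [seq (if x.1 == i then graft_at s x.2 p' else x.2)
                    | x <- zip (iota 0 (size l)) l]
  end.

(* Linear combinations with nonnegative integer coefficients of planar trees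
   are represented as multisets (lists) of planar trees. *)
Definition lgraft (s t : ptree) : seq ptree := [seq graft_at s t v | v <- verts t].

Definition lgraft_lin (A B : seq ptree) : seq ptree :=
  flatten [seq lgraft a b | a <- A, b <- B].

Fixpoint Psi (t : ptree) : seq ptree :=
  let fix go (l : seq ptree) : seq ptree :=
    if l is c :: cs then lgraft_lin (Psi c) (go cs) else [:: bullet] in
  let: Node l := t in go l.

Definition V (t : ptree) := 'I_(size (verts t)).
Definition vtx (t : ptree) (i : V t) : address := nth [::] (verts t) i.
Arguments vtx : clear implicits.

Definition strict_prefix (v w : address) : bool :=
  (size v < size w) && (take (size v) w == v).
Definition anc (t : ptree) (i j : V t) : bool := strict_prefix (vtx t i) (vtx t j).
Arguments anc : clear implicits.

Definition lll (t : ptree) (i j : V t) : bool :=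
  index (vtx t i) (verts t) < index (vtx t j) (verts t).
Arguments lll : clear implicits.

Definition increasing (A B : finType) (ra : rel A) (rb : rel B) (f : A -> B) :=
  [forall a, forall a', ra a a' ==> rb (f a) (f a')].

Definition bijb (A B : finType) (f : A -> B) :=
  injectiveb f && [forall b, exists a, f a == b].

Definition inv_increasing (A B : finType) (rb : rel B) (ra : rel A) (f : A -> B) :=
  [forall x, forall y, rb x y ==>
     [forall a, forall a', ((f a == x) && (f a' == y)) ==> ra a a']].

(* Two planar trees represent the same non-planar rooted tree iff there is a
   bijection of vertices which is an isomorphism of the ancestor orders. *)
Definition np_iso (s t : ptree) : bool :=
  [exists f : {ffun V s -> V t},
     [&& bijb f, increasing (@anc s) (@anc t) f & inv_increasing (@anc t) (@anc s) f]].

Definition sym (s : ptree) : nat :=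
  #|[pred f : {ffun V s -> V s} | bijb f && increasing (@anc s) (@anc s) f]|.

Definition btilde (s tau : ptree) : nat :=
  #|[pred f : {ffun V s -> V tau} |
      [&& bijb f, increasing (@anc s) (@lll tau) f
        & inv_increasing (@anc tau) (@anc s) f]]|.

(* alpha(s, tau): coefficient of the non-planar tree (represented by) s in
   pi(Psi(tau)). *)
Definition alpha (s tau : ptree) : nat := count (fun u => np_iso u s) (Psi tau).

(* Main.v *)
Require Import Defs.
From mathcomp Require Import all_boot all_order all_algebra.
From mathcomp Require Import zify.
From Stdlib Require Import ClassicalEpsilon.


Definition nv t := size (verts t).

Fixpoint ptree_ind2 (P : ptree -> Prop) (H0 : P (Node [::]))
  (H1 : forall c cs, P c -> P (Node cs) -> P (Node (c::cs))) (t : ptree) : P t :=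
  match t with Node l =>
    (fix go (l : seq ptree) : P (Node l) :=
       match l with [::] => H0 | c :: cs => H1 c cs (ptree_ind2 P H0 H1 c) (go cs) end) l
  end.

Lemma vertsE c cs : verts (Node (c::cs)) = map shift_addr (verts (Node cs)) ++ map (cons 0) (verts c).
Proof. reflexivity. Qed.
Lemma vertsE0 : verts (Node [::]) = [:: [::]].
Proof. reflexivity. Qed.
Lemma PsiE c cs : Psi (Node (c::cs)) = lgraft_lin (Psi c) (Psi (Node cs)).
Proof. reflexivity. Qed.
Lemma PsiE0 : Psi (Node [::]) = [:: bullet].
Proof. reflexivity. Qed.

Lemma shift_inj : injective shift_addr.
Proof. by case=> [|i p] [|j q] //= [] -> ->. Qed.

Lemma nv_cons c cs : nv (Node (c::cs)) = nv (Node cs) + nv c.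
Proof. by rewrite /nv vertsE size_cat !size_map. Qed.

Lemma verts_nil t : exists r, verts t = [::] :: r.
Proof.
elim/ptree_ind2: t => [|c cs _ [r IH]]; first by exists [::].
by rewrite vertsE IH /=; eexists.
Qed.

Lemma nv_gt0 t : 0 < nv t.
Proof. by case: (verts_nil t) => r; rewrite /nv => ->. Qed.

Lemma nth_verts0 t : nth [::] (verts t) 0 = [::].
Proof. by case: (verts_nil t) => r ->. Qed.

Lemma verts_uniq t : uniq (verts t).
Proof.
elim/ptree_ind2: t => [|c cs IHc IHcs] //.
have inj0 : injective (cons 0) by move=> x y [].
rewrite vertsE cat_uniq (map_inj_uniq shift_inj) IHcs (map_inj_uniq inj0) IHc andbT /=.
apply/hasPn => x /mapP [p _ ->]; apply/mapP => -[q _].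
by case: q => [|[|i] q].
Qed.

Lemma nth_eq_nil t i : i < nv t -> (nth [::] (verts t) i == [::]) = (i == 0).
Proof.
move=> Hi; rewrite -[X in _ == X](nth_verts0 t) nth_uniq //; [exact: nv_gt0 | exact: verts_uniq].
Qed.

Lemma nth_lo c cs i : i < nv (Node cs) ->
  nth [::] (verts (Node (c::cs))) i = shift_addr (nth [::] (verts (Node cs)) i).
Proof. by move=> Hi; rewrite vertsE nth_cat size_map Hi (nth_map [::]). Qed.

Lemma nth_hi c cs i : i < nv c ->
  nth [::] (verts (Node (c::cs))) (nv (Node cs) + i) = 0 :: nth [::] (verts c) i.
Proof.
move=> Hi; rewrite vertsE nth_cat size_map /nv ltnNge leq_addr /= addKn (nth_map [::]) //.
Qed.

Lemma sp_cons i j p q : strict_prefix (i :: p) (j :: q) = (i == j) && strict_prefix p q.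
Proof.
rewrite /strict_prefix /= ltnS eqseq_cons [j == i]eq_sym.
by case: (i == j); case: (size p < size q).
Qed.

Lemma sp_nil q : strict_prefix [::] q = (q != [::]).
Proof. by case: q. Qed.

Lemma sp_niltgt p : strict_prefix p [::] = false.
Proof. by case: p. Qed.

Lemma sp_shift p q : strict_prefix (shift_addr p) (shift_addr q) = strict_prefix p q.
Proof. by case: p => [|i p]; case: q => [|j q] //=; rewrite !sp_cons eqSS. Qed.

Lemma sp_shift0 p q : strict_prefix (shift_addr p) (0 :: q) = (p == [::]).
Proof. by case: p => [|i p] //=; rewrite sp_cons. Qed.

Lemma sp_0shift p q : strict_prefix (0 :: p) (shift_addr q) = false.
Proof. by case: q => [|j q] //=; rewrite sp_cons. Qed.

Lemma sp_trans p q r : strict_prefix p q -> strict_prefix q r -> strict_prefix p r.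
Proof.
rewrite /strict_prefix => /andP [Hpq /eqP Tpq] /andP [Hqr /eqP Tqr].
rewrite (ltn_trans Hpq Hqr) /=.
have: take (size p) (take (size q) r) = p by rewrite Tqr.
by rewrite take_takel ?(ltnW Hpq) // => ->.
Qed.

Lemma sp_chain p q r : strict_prefix p r -> strict_prefix q r ->
  [|| p == q, strict_prefix p q | strict_prefix q p].
Proof.
rewrite /strict_prefix => /andP [Hpr /eqP Tpr] /andP [Hqr /eqP Tqr].
case: (ltngtP (size p) (size q)) => H /=.
- have: take (size p) (take (size q) r) = p by rewrite take_takel ?(ltnW H).
  by rewrite Tqr => ->; rewrite eqxx orbT.
- have: take (size q) (take (size p) r) = q by rewrite take_takel ?(ltnW H).
  by rewrite Tpr => ->; rewrite eqxx !orbT.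
- by rewrite -Tqr -H Tpr eqxx.
Qed.

Definition ancN t i j := strict_prefix (nth [::] (verts t) i) (nth [::] (verts t) j).

Definition Gr (R1 R2 : nat -> nat -> bool) (n2 v : nat) (i j : nat) : bool :=
  if j < n2 then (i < n2) && R2 i j
  else if i < n2 then (i == v) || R2 i v
  else R1 (i - n2) (j - n2).

Lemma ancN_root t j : j < nv t -> ancN t 0 j = (j != 0).
Proof. by move=> Hj; rewrite /ancN nth_verts0 sp_nil nth_eq_nil. Qed.

Lemma ancN_to_root t i : ancN t i 0 = false.
Proof. by rewrite /ancN nth_verts0 sp_niltgt. Qed.

Lemma ancN_cons c cs i j : i < nv (Node (c::cs)) -> j < nv (Node (c::cs)) ->
  ancN (Node (c::cs)) i j = Gr (ancN c) (ancN (Node cs)) (nv (Node cs)) 0 i j.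
Proof.
rewrite nv_cons => Hi Hj; rewrite /Gr.
have hi k : nv (Node cs) <= k -> k < nv (Node cs) + nv c ->
   nth [::] (verts (Node (c :: cs))) k = 0 :: nth [::] (verts c) (k - nv (Node cs)).
  by move=> H1 H2; rewrite -(nth_hi _ cs) ?subnKC //; lia.
case: ltnP => Hj2; case: ltnP => Hi2 /=; rewrite ?nv_cons in Hi Hj.
- by rewrite /ancN !nth_lo // sp_shift.
- by rewrite /ancN (hi i) // (@nth_lo c cs j Hj2) sp_0shift.
- by rewrite ancN_to_root orbF /ancN (@nth_lo c cs i Hi2) (hi j) // sp_shift0 nth_eq_nil.
- by rewrite /ancN (hi i) // (hi j) // sp_cons.
Qed.

Definition isoF n (R R' : nat -> nat -> bool) (f g : nat -> nat) :=
  0 < n /\ (forall i, i < n -> f i < n) /\ (forall i, i < n -> g i < n) /\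
  (forall i, i < n -> g (f i) = i) /\ (forall i, i < n -> f (g i) = i) /\
  f 0 = 0 /\ (forall i j, i < n -> j < n -> R i j = R' (f i) (f j)).

Lemma isoF_intro n R R' f g : 0 < n -> (forall i, i < n -> f i < n) -> (forall i, i < n -> g i < n) ->
  (forall i, i < n -> g (f i) = i) -> (forall i, i < n -> f (g i) = i) ->
  f 0 = 0 -> (forall i j, i < n -> j < n -> R i j = R' (f i) (f j)) -> isoF n R R' f g.
Proof. by move=> *; do !split. Qed.

Definition isoR n R R' := exists f g, isoF n R R' f g.

Lemma isoR_eq n (R R' : nat -> nat -> bool) : 0 < n ->
  (forall i j, i < n -> j < n -> R i j = R' i j) -> isoR n R R'.
Proof. by move=> n0 H; exists id, id. Qed.

Lemma isoF_sym n R R' f g : isoF n R R' f g -> isoF n R' R g f.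
Proof.
case=> n0 [Hf [Hg [Hgf [Hfg [f0 HR]]]]]; apply: isoF_intro => //.
- by rewrite -{1}f0 Hgf.
- by move=> i j Hi Hj; rewrite HR ?Hg ?Hfg.
Qed.

Lemma isoR_sym n R R' : isoR n R R' -> isoR n R' R.
Proof. by case=> f [g H]; exists g, f; apply: isoF_sym. Qed.

Lemma isoR_trans n R1 R2 R3 : isoR n R1 R2 -> isoR n R2 R3 -> isoR n R1 R3.
Proof.
case=> f [g [n0 [Hf [Hg [Hgf [Hfg [f0 HR]]]]]]].
case=> f' [g' [_ [Hf' [Hg' [Hgf' [Hfg' [f0' HR']]]]]]].
exists (fun i => f' (f i)), (fun i => g (g' i)); apply: isoF_intro.
- by [].
- by move=> i Hi; apply: Hf'; apply: Hf.
- by move=> i Hi; apply: Hg; apply: Hg'.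
- by move=> i Hi; rewrite Hgf' ?Hf ?Hgf.
- by move=> i Hi; rewrite Hfg ?Hg' ?Hfg'.
- by rewrite f0 f0'.
- by move=> i j Hi Hj; rewrite HR // HR' ?Hf.
Qed.

Lemma isoR_Gr n1 n2 R1 R1' R2 R2' f2 g2 v : v < n2 ->
  isoR n1 R1 R1' -> isoF n2 R2 R2' f2 g2 ->
  isoR (n2 + n1) (Gr R1 R2 n2 v) (Gr R1' R2' n2 (f2 v)).
Proof.
move=> Hv [f1 [g1 [n10 [Hf1 [Hg1 [Hgf1 [Hfg1 [f10 HR1]]]]]]]] [n20 [Hf2 [Hg2 [Hgf2 [Hfg2 [f20 HR2]]]]]].
exists (fun i => if i < n2 then f2 i else n2 + f1 (i - n2)).
exists (fun i => if i < n2 then g2 i else n2 + g1 (i - n2)).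
have inj2 i j : i < n2 -> j < n2 -> (f2 i == f2 j) = (i == j).
  move=> Hi Hj; apply/eqP/eqP => [E|->] //.
  by rewrite -(Hgf2 i) // E Hgf2.
apply: isoF_intro.
- lia.
- move=> i Hi; case: ifP => H; first by have := Hf2 i H; lia.
  have := Hf1 (i - n2); lia.
- move=> i Hi; case: ifP => H; first by have := Hg2 i H; lia.
  have := Hg1 (i - n2); lia.
- move=> i Hi; case: (ltnP i n2) => H; first by rewrite Hf2 // Hgf2.
  have -> : (n2 + f1 (i - n2) < n2) = false by lia.
  rewrite addKn Hgf1; lia.
- move=> i Hi; case: (ltnP i n2) => H; first by rewrite Hg2 // Hfg2.
  have -> : (n2 + g1 (i - n2) < n2) = false by lia.
  rewrite addKn Hfg1; lia.
- by rewrite n20 f20.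
- move=> i j Hi Hj; rewrite /Gr.
  case: (ltnP j n2) => Hj2; case: (ltnP i n2) => Hi2.
  + by rewrite !Hf2 // HR2.
  + have -> : (n2 + f1 (i - n2) < n2) = false by lia.
    by rewrite Hf2 // andbF.
  + have -> : (n2 + f1 (j - n2) < n2) = false by lia.
    by rewrite Hf2 // inj2 // HR2.
  + have -> : (n2 + f1 (j - n2) < n2) = false by lia.
    have -> : (n2 + f1 (i - n2) < n2) = false by lia.
    rewrite !addKn HR1 //; lia.
Qed.

Ltac dec_nat :=
  repeat match goal with
  | |- context [?a < ?b] =>
      first [ rewrite (_ : (a < b) = true); last by lia
            | rewrite (_ : (a < b) = false); last by lia ]
  | |- context [?a == ?b :> nat] =>
      first [ rewrite (_ : (a == b) = true); last by lia
            | rewrite (_ : (a == b) = false); last by lia ]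
  end.

Lemma Gr_assoc Ra Rc RT nT nc na v i j : v < nc -> i < nT + nc + na -> j < nT + nc + na ->
  Gr Ra (Gr Rc RT nT 0) (nT + nc) (nT + v) i j = Gr (Gr Ra Rc nc v) RT nT 0 i j.
Proof.
move=> Hv Hi Hj; rewrite /Gr.
case: (ltnP i nT) => ?; case: (ltnP i (nT + nc)) => ?;
case: (ltnP j nT) => ?; case: (ltnP j (nT + nc)) => ?; dec_nat => //=;
try (exfalso; lia); rewrite ?addKn ?subnDA //.
by congr (_ || _); apply/eqP/eqP; lia.
Qed.

Lemma Gr_swap Ra Rc RT nT nc na v : v < nT -> 0 < nT ->
  isoR (nT + na + nc) (Gr Rc (Gr Ra RT nT v) (nT + na) 0) (Gr Ra (Gr Rc RT nT 0) (nT + nc) v).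
Proof.
move=> Hv HT.
pose f i := if i < nT then i else if i < nT + na then i + nc else i - na.
pose g i := if i < nT then i else if i < nT + nc then i + na else i - nc.
exists f, g; apply: isoF_intro; rewrite /f /g.
- lia.
- move=> i Hi; case: (ltnP i nT) => ?; case: (ltnP i (nT + na)) => ?; lia.
- move=> i Hi; case: (ltnP i nT) => ?; case: (ltnP i (nT + nc)) => ?; lia.
- move=> i Hi; case: (ltnP i nT) => ?; case: (ltnP i (nT + na)) => ?; dec_nat; lia.
- move=> i Hi; case: (ltnP i nT) => ?; case: (ltnP i (nT + nc)) => ?; dec_nat; lia.
- by rewrite HT.
- move=> i j Hi Hj; rewrite /Gr.
  case: (ltnP i nT) => ?; case: (ltnP i (nT + na)) => ?;
  case: (ltnP j nT) => ?; case: (ltnP j (nT + na)) => ?; try (exfalso; lia); dec_nat => //=;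
  rewrite ?addKn ?subnDA; dec_nat => //=.
all: by apply: f_equal2; lia.
Qed.

Lemma map_zip_shift a p i k (cs : seq ptree) :
  [seq (if x.1 == i.+1 then graft_at a x.2 p else x.2) | x <- zip (iota k.+1 (size cs)) cs] =
  [seq (if x.1 == i then graft_at a x.2 p else x.2) | x <- zip (iota k (size cs)) cs].
Proof. by elim: cs k => [|c cs IH] k //=; rewrite eqSS IH. Qed.

Lemma map_zip_0 a p k (cs : seq ptree) :
  [seq (if x.1 == 0 then graft_at a x.2 p else x.2) | x <- zip (iota k.+1 (size cs)) cs] = cs.
Proof. by elim: cs k => [|c cs IH] k //=; rewrite IH. Qed.

Lemma graft0 a c cs p : graft_at a (Node (c :: cs)) (0 :: p) = Node (graft_at a c p :: cs).
Proof. by rewrite /= map_zip_0. Qed.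

Lemma graftS a c cs i p : graft_at a (Node (c :: cs)) (i.+1 :: p) = lbutcher c (graft_at a (Node cs) (i :: p)).
Proof. by rewrite /= map_zip_shift. Qed.

Lemma isoF_eq n (R R' : nat -> nat -> bool) : 0 < n ->
  (forall i j, i < n -> j < n -> R i j = R' i j) -> isoF n R R' id id.
Proof. by move=> n0 H; apply: isoF_intro. Qed.

Lemma isoR_dim n m R R' : n = m -> isoR n R R' -> isoR m R R'.
Proof. by move=> ->. Qed.

Lemma graft_iso a w : forall b, w \in verts b ->
  nv (graft_at a b w) = nv b + nv a /\
  isoR (nv b + nv a) (ancN (graft_at a b w)) (Gr (ancN a) (ancN b) (nv b) (index w (verts b))).
Proof.
elim: w => [|i p IHp] [l] Hw.
- have Hn : nv (graft_at a (Node l) [::]) = nv (Node l) + nv a by rewrite /= nv_cons.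
  split=> //; rewrite -Hn.
  have -> : index [::] (verts (Node l)) = 0 by case: (verts_nil (Node l)) => r ->.
  apply: isoR_eq; first exact: nv_gt0.
  by move=> i j Hi Hj; rewrite /= ancN_cons.
- elim: i l Hw => [|i IHi] [|c cs] Hw; try by rewrite vertsE0 inE in Hw.
  + have Hp : p \in verts c.
      move: Hw; rewrite vertsE mem_cat => /orP [/mapP [q _]|/mapP [q Hq [->]]] //.
      by case: q => [|[|j] q].
    rewrite graft0; have [Hn Hiso] := IHp c Hp.
    have Hidx : index (0 :: p) (verts (Node (c :: cs))) = nv (Node cs) + index p (verts c).
      rewrite vertsE index_cat size_map.
      have -> : (0 :: p \in [seq shift_addr i | i <- verts (Node cs)]) = false.
        by apply/mapP => -[[|[|j] q] _].
      by rewrite index_map // => x y [].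
    have Hpi : index p (verts c) < nv c by rewrite index_mem.
    rewrite Hidx; split; first by rewrite !nv_cons Hn addnA.
    rewrite nv_cons.
    set g := graft_at a c p in Hn Hiso *.
    set ncs := nv (Node cs); set nc := nv c; set na := nv a.
    have Ecs : 0 < ncs by exact: nv_gt0.
    have HN : nv (Node (g :: cs)) = ncs + nc + na by rewrite nv_cons Hn addnA.
    apply: (@isoR_trans _ _ (Gr (ancN g) (ancN (Node cs)) ncs 0)).
      apply: isoR_eq; first by lia.
      by move=> i j Hi Hj; rewrite ancN_cons ?HN.
    apply: (@isoR_trans _ _ (Gr (Gr (ancN a) (ancN c) nc (index p (verts c))) (ancN (Node cs)) ncs 0)).
      apply: (@isoR_dim (ncs + nv g)); first by rewrite Hn addnA.
      apply: (@isoR_Gr _ _ _ _ _ _ id id) => //; first by rewrite Hn.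
    apply: (@isoR_trans _ _ (Gr (ancN a) (Gr (ancN c) (ancN (Node cs)) ncs 0) (ncs + nc) (ncs + index p (verts c)))).
      apply: isoR_eq; first by lia.
      by move=> i j Hi Hj; rewrite (@Gr_assoc _ _ _ _ _ na).
    apply: (@isoR_Gr _ _ _ _ _ _ id id (ncs + index p (verts c))).
    * lia.
    * by apply: isoR_eq; first exact: nv_gt0.
    * apply: isoF_eq; first by lia.
      by move=> i j Hi Hj; rewrite ancN_cons // nv_cons.
  + have Hw' : i :: p \in verts (Node cs).
      move: Hw; rewrite vertsE mem_cat => /orP [/mapP [q Hq]|/mapP [q Hq] //].
      by case: q Hq => [|j q] //= Hq [-> ->].
    rewrite graftS; have [Hn Hiso] := IHi cs Hw'.
    have Hidx : index (i.+1 :: p) (verts (Node (c :: cs))) = index (i :: p) (verts (Node cs)).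
      have -> : i.+1 :: p = shift_addr (i :: p) by [].
      by rewrite vertsE index_cat (mem_map shift_inj) Hw' index_map //; exact: shift_inj.
    have Hpi : index (i :: p) (verts (Node cs)) < nv (Node cs) by rewrite index_mem.
    rewrite Hidx; move: Hn Hiso; case E: (graft_at a (Node cs) (i :: p)) => [cs'] /= Hn Hiso.
    split; first by rewrite !nv_cons Hn; lia.
    rewrite nv_cons.
    set idx := index (i :: p) (verts (Node cs)) in Hpi Hiso *.
    set ncs := nv (Node cs) in Hn Hiso Hpi *; set nc := nv c; set na := nv a in Hn Hiso *.
    have Ecs : 0 < ncs by exact: nv_gt0.
    have Ec : 0 < nc by exact: nv_gt0.
    apply: (@isoR_trans _ _ (Gr (ancN c) (ancN (Node cs')) (ncs + na) 0)).
      apply: isoR_eq; first by lia.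
      by move=> i' j Hi Hj; rewrite ancN_cons ?Hn // nv_cons; lia.
    apply: (@isoR_trans _ _ (Gr (ancN c) (Gr (ancN a) (ancN (Node cs)) ncs idx) (ncs + na) 0)).
      case: Hiso => f2 [g2 Hf].
      have Hc : isoR nc (ancN c) (ancN c) by apply: isoR_eq.
      have E2 : 0 < ncs + na by lia.
      have := @isoR_Gr _ _ _ _ _ _ _ _ 0 E2 Hc Hf.
      have -> : f2 0 = 0 by case: Hf => [_ [_ [_ [_ [_ [-> _]]]]]].
      by apply: isoR_dim; lia.
    have Hs := @Gr_swap (ancN a) (ancN c) (ancN (Node cs)) ncs nc na idx Hpi Ecs.
    rewrite -addnA [na + nc]addnC addnA in Hs.
    apply: isoR_trans Hs _.
    apply: (@isoR_Gr _ _ _ _ _ _ id id idx).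
    * lia.
    * by apply: isoR_eq; first exact: nv_gt0.
    * apply: isoF_eq; first by lia.
      by move=> i' j Hi Hj; rewrite ancN_cons // nv_cons.
Qed.

Definition Good n t (R : nat -> nat -> bool) :=
 (forall i j k, i < n -> j < n -> k < n -> R i j -> R j k -> R i k) /\
 (forall i j k, i < n -> j < n -> k < n -> R i k -> R j k -> [|| i == j, R i j | R j i]) /\
 (forall i j, i < n -> j < n -> ancN t i j -> R i j) /\
 (forall i j, i < n -> j < n -> R i j -> i < j).

Lemma Good_Gr c cs R1 R2 v : v < nv (Node cs) ->
  Good (nv c) c R1 -> Good (nv (Node cs)) (Node cs) R2 ->
  Good (nv (Node (c :: cs))) (Node (c :: cs)) (Gr R1 R2 (nv (Node cs)) v).
Proof.
rewrite nv_cons; set n2 := nv (Node cs); set n1 := nv c => Hv.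
case=> T1 [C1 [A1 L1]] [T2 [C2 [A2 L2]]].
split; [|split; [|split]].
- move=> i j k Hi Hj Hk; rewrite /Gr.
  case: (ltnP i n2)=>?; case: (ltnP j n2)=>?; case: (ltnP k n2)=>? //=; dec_nat => //=.
  + exact: T2.
  + move=> Hij /orP [/eqP Ej|Hjv]; first by subst j; rewrite Hij orbT.
    by rewrite (T2 i j v) ?orbT.
  + apply: T1; lia.
- move=> i j k Hi Hj Hk; rewrite /Gr.
  case: (ltnP i n2)=>?; case: (ltnP j n2)=>?; case: (ltnP k n2)=>? //=; dec_nat => //=.
  + exact: C2.
  + move=> /orP [/eqP Ei|Hiv] /orP [/eqP Ej|Hjv].
    * by subst; rewrite eqxx.
    * by subst i; rewrite Hjv !orbT.
    * by subst j; rewrite Hiv orbT.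
    * exact: (C2 i j v).
  + by move=> ->.
  + move=> H1 H2; have := C1 (i - n2) (j - n2) (k - n2).
    have Hi' : i - n2 < n1 by lia.
    have Hj' : j - n2 < n1 by lia.
    have Hk' : k - n2 < n1 by lia.
    move=> /(_ Hi' Hj' Hk' H1 H2) /orP [/eqP E|->]; last by rewrite !orbT.
    have -> : i = j by lia.
    by rewrite eqxx.
- move=> i j Hi Hj; rewrite ancN_cons ?nv_cons // /Gr.
  case: (ltnP i n2)=>?; case: (ltnP j n2)=>? //=; dec_nat => //=.
  + exact: A2.
  + rewrite ancN_to_root orbF => /eqP ->.
    case: (eqVneq v 0) => [->|Hv0] //.
    by rewrite (A2 0 v) ?orbT // ?ancN_root //; lia.
  + apply: A1; lia.
- move=> i j Hi Hj; rewrite /Gr.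
  case: (ltnP i n2)=>?; case: (ltnP j n2)=>? //=; dec_nat => //=.
  + exact: L2.
  + move=> H; have := L1 (i - n2) (j - n2); lia.
Qed.

Definition eqR n (R R' : nat -> nat -> bool) := [forall i : 'I_n, forall j : 'I_n, R i j == R' i j].

Lemma eqRP n R R' : reflect (forall i j, i < n -> j < n -> R i j = R' i j) (eqR n R R').
Proof.
apply: (iffP forallP) => [H i j Hi Hj|H i].
- by have /forallP /(_ (Ordinal Hj)) /eqP := H (Ordinal Hi).
- by apply/forallP => j; rewrite H.
Qed.

Lemma eqR_Gr n1 n2 (R R1 R2 : nat -> nat -> bool) v vR : 0 < n1 -> v < n2 -> vR < n2 ->
  (forall i j, i < n2 -> j < n2 -> R i j -> i < j) ->
  (forall i j, i < n2 -> n2 <= j -> j < n2 + n1 -> R i j = (i == vR) || R i vR) ->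
  (forall i j, n2 <= i -> i < n2 + n1 -> j < n2 -> R i j = false) ->
  eqR (n2 + n1) (Gr R1 R2 n2 v) R =
  [&& eqR n1 R1 (fun i j => R (n2 + i) (n2 + j)), eqR n2 R2 R & v == vR].
Proof.
move=> n10 Hv HvR LR Hcross Hlow.
apply/eqRP/and3P => [H|[/eqRP H1 /eqRP H2 /eqP ->] i j Hi Hj].
- have E2 : forall i j, i < n2 -> j < n2 -> R2 i j = R i j.
    by move=> i j Hi Hj; rewrite -H ?/Gr ?Hi ?Hj //; lia.
  split.
  + apply/eqRP => i j Hi Hj; rewrite -H; try lia.
    by rewrite /Gr; dec_nat; rewrite !addKn.
  + by apply/eqRP.
  + have Hvv : R v n2 by rewrite -H ?/Gr; dec_nat; rewrite ?eqxx //; lia.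
    have Hvr : R vR n2 by rewrite Hcross ?eqxx //; lia.
    rewrite -H /Gr in Hvr; try lia; move: Hvr; dec_nat.
    rewrite Hcross in Hvv; try lia.
    case/orP: Hvv => [//|Hvv]; rewrite eq_sym; case/orP => [//|Hr2].
    rewrite E2 // in Hr2; have := LR _ _ Hv HvR Hvv; have := LR _ _ HvR Hv Hr2; lia.
- rewrite /Gr; case: (ltnP j n2) => Hj2; case: (ltnP i n2) => Hi2 /=.
  all: first [ by rewrite H2 | by rewrite (Hlow i j Hi2 Hi Hj2) | by rewrite (Hcross i j) // H2
             | by rewrite H1; try lia; congr R; lia | idtac ].
Qed.

Lemma ex_max (P : nat -> bool) n : (exists2 i, i < n & P i) ->
  exists2 v, v < n & P v /\ forall i, i < n -> P i -> i <= v.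
Proof.
elim: n => [[i //]|n IH [i Hi Pi]].
case Pn: (P n).
- exists n => //; split=> // k Hk _; lia.
- have [|v Hv [Pv Hmax]] := IH.
    exists i => //; move: Hi; rewrite ltnS leq_eqVlt => /orP [/eqP Ei|//].
    by rewrite Ei Pn in Pi.
  exists v; first lia; split=> // k Hk Pk.
  move: Hk; rewrite ltnS leq_eqVlt => /orP [/eqP Ek|Hk]; last exact: Hmax.
  by rewrite Ek Pn in Pk.
Qed.

Lemma decomp c cs R : Good (nv (Node (c::cs))) (Node (c::cs)) R ->
  [/\ Good (nv (Node cs)) (Node cs) R,
      Good (nv c) c (fun i j => R (nv (Node cs) + i) (nv (Node cs) + j)),
      (forall i j, nv (Node cs) <= i -> i < nv (Node cs) + nv c -> j < nv (Node cs) -> R i j = false) &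
      exists2 vR, vR < nv (Node cs) & (forall i j, i < nv (Node cs) -> nv (Node cs) <= j ->
         j < nv (Node cs) + nv c -> R i j = (i == vR) || R i vR)].
Proof.
have := nv_cons c cs; set n := nv (Node (c :: cs)); set n2 := nv (Node cs); set n1 := nv c => En.
have n10 : 0 < n1 by exact: nv_gt0.
have n20 : 0 < n2 by exact: nv_gt0.
case=> T [C [A L]].
have Aeq : forall i j, i < n -> j < n -> ancN (Node (c :: cs)) i j = Gr (ancN c) (ancN (Node cs)) n2 0 i j.
  by move=> i j Hi Hj; rewrite ancN_cons.
split.
- split; [|split; [|split]].
  + move=> i j k Hi Hj Hk; apply: T; lia.
  + move=> i j k Hi Hj Hk; apply: C; lia.
  + move=> i j Hi Hj H; apply: A; try lia.
    by rewrite Aeq /Gr ?Hi ?Hj //; lia.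
  + move=> i j Hi Hj; apply: L; lia.
- split; [|split; [|split]].
  + move=> i j k Hi Hj Hk; apply: T; lia.
  + move=> i j k Hi Hj Hk Hik Hjk; have := C _ _ _ _ _ _ Hik Hjk.
    rewrite eqn_add2l; apply; lia.
  + move=> i j Hi Hj H; apply: A; try lia.
    rewrite Aeq; try lia; rewrite /Gr; dec_nat; by rewrite !addKn.
  + move=> i j Hi Hj H; have := L _ _ _ _ H; lia.
- move=> i j Hi Hi' Hj; apply/negP => H; have := L i j; lia.
- have [vR HvR [PvR Hmax]] : exists2 v, v < n2 & R v n2 /\ forall i, i < n2 -> R i n2 -> i <= v.
    apply: (@ex_max (fun i => R i n2)); exists 0 => //; apply: A; try lia.
    by rewrite Aeq /Gr; try lia; dec_nat.
  exists vR => // i j Hi Hj2 Hj.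
  have Hn2j : forall k, k < n2 -> R k j = R k n2.
    move=> k Hk; case: (eqVneq j n2) => [->//|Hjn].
    have Rn2j : R n2 j.
      apply: A; try lia; rewrite Aeq /Gr; try lia; dec_nat.
      rewrite subnn ancN_root; lia.
    apply/idP/idP => [Hkj|Hkn]; last by apply: (T _ n2); lia.
    have b1 : k < n by lia.
    have b2 : n2 < n by lia.
    have b3 : j < n by lia.
    have := C k n2 j b1 b2 b3 Hkj Rn2j; case/orP => [/eqP E|/orP [//|H]]; first lia.
    have := L _ _ b2 b1 H; lia.
  rewrite Hn2j //; apply/idP/idP => [Hin|/orP [/eqP ->//|Hiv]]; last by apply: (T _ vR); lia.
  have b1 : i < n by lia.
  have b2 : vR < n by lia.
  have b3 : n2 < n by lia.
  have := C i vR n2 b1 b2 b3 Hin PvR; case/orP => [->//|/orP [->|H]]; first by rewrite orbT.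
  have := L _ _ b2 b1 H; have := Hmax i Hi Hin; lia.
Qed.

Fixpoint allp {T} (P : T -> Prop) (s : seq T) : Prop :=
  if s is x :: s' then P x /\ allp P s' else True.

Lemma allp_cat T (P : T -> Prop) s1 s2 : allp P s1 -> allp P s2 -> allp P (s1 ++ s2).
Proof. by elim: s1 => [|x s1 IH] //= [Hx H1] H2; split=> //; apply: IH. Qed.

Lemma allp_flatten_map T U (P0 : T -> Prop) (P : U -> Prop) f s :
  (forall x, P0 x -> allp P (f x)) -> allp P0 s -> allp P (flatten (map f s)).
Proof. move=> H; elim: s => [|x s IH] //= [Hx Hs]; apply: allp_cat; auto. Qed.

Lemma allp_map T U (P0 : T -> Prop) (P : U -> Prop) (f : T -> U) s :
  (forall x, P0 x -> P (f x)) -> allp P0 s -> allp P (map f s).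
Proof. move=> H; elim: s => [|x s IH] //= [Hx Hs]; split; auto. Qed.

Lemma allp_in (T : eqType) (P : T -> Prop) (s : seq T) :
  (forall x, x \in s -> P x) -> allp P s.
Proof.
elim: s => [|x s IH] //= H; split; first by apply: H; exact: mem_head.
by apply: IH => y Hy; apply: H; rewrite inE Hy orbT.
Qed.

Lemma sumn_map_eq T (P0 : T -> Prop) (f g : T -> nat) s :
  (forall x, P0 x -> f x = g x) -> allp P0 s -> sumn (map f s) = sumn (map g s).
Proof. move=> H; elim: s => [|x s IH] //= [Hx Hs]; by rewrite H // IH. Qed.

Definition isomap n R R' : (nat -> nat) * (nat -> nat) :=
  epsilon (inhabits (id, id)) (fun fg => isoF n R R' fg.1 fg.2).

Lemma isomapP n R R' : isoR n R R' -> isoF n R R' (isomap n R R').1 (isomap n R R').2.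
Proof.
case=> f [g H]; rewrite /isomap.
exact: (epsilon_spec (inhabits (id, id)) (fun fg => isoF n R R' fg.1 fg.2) (ex_intro _ (f, g) H)).
Qed.

Lemma flatten_flatten T (s : seq (seq (seq T))) : flatten (flatten s) = flatten (map flatten s).
Proof. by elim: s => [|x s IH] //=; rewrite flatten_cat IH. Qed.

Lemma map_index_iota (T : eqType) (s : seq T) : uniq s -> map (index^~ s) s = iota 0 (size s).
Proof.
elim: s => [|x s IH] //= /andP [Hx Us]; rewrite eqxx; congr cons.
have -> : iota 1 (size s) = map (addn 1) (iota 0 (size s)) by rewrite -iotaDl.
rewrite -IH //.
rewrite -map_comp; apply/eq_in_map => y Hy /=.
by have -> : (x == y) = false by apply/eqP => E; rewrite E Hy in Hx.
Qed.

Lemma count_w b R2 f2 g2 n2 (P : pred nat) : nv b = n2 -> isoF n2 (ancN b) R2 f2 g2 ->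
  count (fun w => P (f2 (index w (verts b)))) (verts b) = count P (iota 0 n2).
Proof.
move=> Hn [n0 [Hf [Hg [Hgf [Hfg _]]]]].
have -> : count (fun w => P (f2 (index w (verts b)))) (verts b) = count P (map f2 (map (index^~ (verts b)) (verts b))).
  by rewrite -map_comp count_map.
rewrite map_index_iota ?verts_uniq // -/(nv b) Hn.
suff /permP -> : perm_eq (map f2 (iota 0 n2)) (iota 0 n2) by [].
apply: uniq_perm; last first.
- move=> x; rewrite mem_iota add0n; apply/mapP/idP => [[y]|Hx].
    by rewrite mem_iota add0n => Hy ->; apply: Hf.
  by exists (g2 x); rewrite ?mem_iota ?add0n ?Hg ?Hfg.
- by apply: iota_uniq.
- rewrite map_inj_in_uniq ?iota_uniq // => x y; rewrite !mem_iota !add0n => Hx Hy E.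
  by rewrite -(Hgf x) // E Hgf.
Qed.

Definition Lab := (ptree * (nat -> nat -> bool))%type.

Definition Inv (t : ptree) (x : Lab) :=
  nv x.1 = nv t /\ isoR (nv t) (ancN x.1) x.2 /\ Good (nv t) t x.2.

Lemma main t : exists L : seq Lab,
  [/\ map fst L = Psi t, allp (Inv t) L &
      forall R, Good (nv t) t R -> count (fun x => eqR (nv t) x.2 R) L = 1].
Proof.
elim/ptree_ind2: t => [|c cs [L1 [E1 A1 C1]] [L2 [E2 A2 C2]]].
- exists [:: (bullet, fun _ _ => false)]; split=> //.
  + split=> //; split=> //; split; first by apply: isoR_eq => // -[|i] [|j].
    split; [by []|split; [by []|split]].
    * by move=> [|i] [|j].
    * by move=> [|i] [|j].
  + move=> R [_ [_ [_ L]]] /=; rewrite addn0.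
    suff -> : eqR (nv bullet) (fun _ _ => false) R by [].
    apply/eqRP => [] [|i] [|j] //= _ _.
    by case E: (R 0 0) => //; have := L 0 0 isT isT E.
- set n2 := nv (Node cs); set n1 := nv c.
  pose phi (x2 : Lab) w := (isomap n2 (ancN x2.1) x2.2).1 (index w (verts x2.1)).
  pose F2 (x1 x2 : Lab) := map (fun w => (graft_at x1.1 x2.1 w, Gr x1.2 x2.2 n2 (phi x2 w))) (verts x2.1).
  pose F1 (x1 : Lab) := flatten (map (F2 x1) L2).
  exists (flatten (map F1 L1)); split.
  + rewrite PsiE -E1 -E2 /lgraft_lin /lgraft flatten_flatten map_flatten -!map_comp.
    congr flatten; apply: eq_map => x1 /=.
    rewrite /F1 map_flatten -!map_comp; congr flatten; apply: eq_map => x2 /=.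
    by rewrite /F2 -map_comp.
  + apply: (@allp_flatten_map _ _ (Inv c)) A1 => x1 [Ha1 [Hi1 G1]].
    apply: (@allp_flatten_map _ _ (Inv (Node cs))) A2 => x2 [Ha2 [Hi2 G2]].
    apply: (@allp_map _ _ (fun w => w \in verts x2.1)); last by apply: allp_in.
    move=> w Hw; have [Hn Hiso] := @graft_iso x1.1 w x2.1 Hw.
    have Hf := @isomapP _ _ _ Hi2.
    have Hidx : index w (verts x2.1) < n2 by rewrite /n2 -Ha2 index_mem.
    rewrite Ha1 Ha2 in Hn Hiso.
    split; [|split] => /=.
    * by rewrite nv_cons Hn.
    * rewrite nv_cons; apply: isoR_trans Hiso _.
      exact: isoR_Gr Hidx Hi1 Hf.
    * apply: Good_Gr => //.
      by case: Hf => [_ [Hf _]]; apply: Hf.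
  + move=> R GR; have [G2R G1R Hlow [vR HvR Hcross]] := @decomp c cs R GR.
    have n10 : 0 < n1 by exact: nv_gt0.
    set R1s := fun i j => R (n2 + i) (n2 + j).
    have LR2 : forall i j, i < n2 -> j < n2 -> R i j -> i < j.
      by case: G2R => [_ [_ [_ H]]].
    set P := fun x : Lab => eqR (nv (Node (c :: cs))) x.2 R.
    have step2 : forall x1 x2, Inv (Node cs) x2 ->
        count P (F2 x1 x2) = eqR n1 x1.2 R1s && eqR n2 x2.2 R.
      move=> x1 x2 [Ha2 [Hi2 _]]; have Hf := @isomapP _ _ _ Hi2.
      rewrite /F2 count_map.
      have := @count_w x2.1 x2.2 _ _ n2 (fun v => eqR (nv (Node (c :: cs))) (Gr x1.2 x2.2 n2 v) R) Ha2 Hf.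
      rewrite /preim /P /phi /= => ->.
      rewrite (@eq_in_count _ _ (fun v => (eqR n1 x1.2 R1s && eqR n2 x2.2 R) && (v == vR))); last first.
        move=> v; rewrite mem_iota add0n => Hv.
        by rewrite nv_cons (@eqR_Gr n1 n2 R x1.2 x2.2 v vR) // andbA.
      case: (eqR n1 x1.2 R1s && eqR n2 x2.2 R) => /=.
      * by rewrite (count_uniq_mem _ (iota_uniq 0 n2)) mem_iota add0n HvR.
      * exact: count_pred0.
    have step1 : forall x1, count P (F1 x1) = eqR n1 x1.2 R1s.
      move=> x1; rewrite /F1 count_flatten -map_comp.
      rewrite (@sumn_map_eq _ (Inv (Node cs)) _ (fun x2 => eqR n1 x1.2 R1s && eqR n2 x2.2 R) L2 _ A2); last first.
        by move=> x2 H2; rewrite /= step2.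
      case: (eqR n1 x1.2 R1s) => /=.
      * by rewrite sumn_count C2.
      * by elim: (L2) => [|y l IH] //.
    rewrite count_flatten -map_comp.
    have AT : allp (fun _ : Lab => True) L1 by elim: (L1) => [|y l IH] //.
    rewrite (@sumn_map_eq _ (fun _ => True) _ (fun x1 => eqR n1 x1.2 R1s) L1 _ AT); last first.
      by move=> x1 _; rewrite /= step1.
    by rewrite sumn_count C1.
Qed.
Set Implicit Arguments. Unset Strict Implicit.

Definition IsoSet (C A : finType) (RC : rel C) (RA : rel A) :=
  [pred phi : {ffun C -> A} | bijb phi && [forall a, forall b, RC a b == RA (phi a) (phi b)]].


Lemma bijb_inv (A B : finType) (f : A -> B) : bijb f -> exists g, cancel f g /\ cancel g f.
Proof.
case/andP => /injectiveP inj /forallP Hs.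
have ex b : exists a, f a == b by apply/existsP; exact: Hs.
exists (fun b => xchoose (ex b)); split.
- by move=> a; apply: inj; apply/eqP; exact: xchooseP (ex (f a)).
- by move=> b; apply/eqP; exact: xchooseP (ex b).
Qed.

Lemma bijbP (A B : finType) (f : A -> B) (g : B -> A) : cancel f g -> cancel g f -> bijb f.
Proof.
move=> fK gK; apply/andP; split; first by apply/injectiveP; exact: can_inj fK.
by apply/forallP => b; apply/existsP; exists (g b); rewrite gK.
Qed.

Lemma card_le_inj (T T' : finType) (P : {pred T}) (Q : {pred T'}) (F : T -> T') :
  {in P &, injective F} -> (forall x, x \in P -> F x \in Q) -> #|P| <= #|Q|.
Proof.
move=> inj HQ; rewrite -(card_in_imset inj); apply: subset_leq_card.
by apply/subsetP => y /imsetP [x Px ->]; apply: HQ.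
Qed.

Lemma transport (C A B : finType) (RC : rel C) (RA : rel A) (RB : rel B) (k : A -> B) (k' : B -> A) :
  cancel k k' -> cancel k' k -> (forall x y, RA x y = RB (k x) (k y)) ->
  #|IsoSet RC RA| = #|IsoSet RC RB|.
Proof.
move=> kK k'K Hk.
have Hk' : forall x y, RB x y = RA (k' x) (k' y) by move=> x y; rewrite Hk !k'K.
have gen (X Y : finType) (RX : rel X) (RY : rel Y) (h : X -> Y) (h' : Y -> X) :
    cancel h h' -> cancel h' h -> (forall x y, RX x y = RY (h x) (h y)) ->
    #|IsoSet RC RX| <= #|IsoSet RC RY|.
  move=> hK h'K Hh; apply: (@card_le_inj _ _ (IsoSet RC RX) (IsoSet RC RY) (fun phi => [ffun c => h (phi c)])).
  - move=> phi psi _ _ E; apply/ffunP => c.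
    by have := congr1 (fun f : {ffun C -> Y} => h' (f c)) E; rewrite /= !ffunE !hK.
  - move=> phi; rewrite !inE => /andP [Hb /forallP HR]; apply/andP; split.
    + case: (bijb_inv Hb) => g [pK gK].
      apply: (@bijbP _ _ _ (fun y => g (h' y))) => [c|y]; rewrite ?ffunE.
      * by rewrite hK pK.
      * by rewrite gK h'K.
    + apply/forallP => a; apply/forallP => b; rewrite !ffunE -Hh.
      by have /forallP := HR a; apply.
by apply/eqP; rewrite eqn_leq (gen _ _ _ _ k k') // (gen _ _ _ _ k' k).
Qed.

Lemma incr_inv_iff (A B : finType) (ra : rel A) (rb : rel B) (f : A -> B) :
  (increasing ra rb f && inv_increasing rb ra f) = [forall a, forall b, ra a b == rb (f a) (f b)].
Proof.
apply/idP/idP.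
- case/andP; rewrite /increasing /inv_increasing => /forallP Hi /forallP Hv.
  apply/forallP => a; apply/forallP => b; apply/eqP; apply/idP/idP => [Hab|Hf].
  + by have /forallP /(_ b) /implyP := Hi a; apply.
  + have /forallP /(_ (f b)) /implyP /(_ Hf) /forallP /(_ a) /forallP /(_ b) /implyP := Hv (f a).
    by apply; rewrite !eqxx.
- move/forallP => H; apply/andP; split; apply/forallP => x; apply/forallP => y.
  + by apply/implyP => Hxy; have /forallP /(_ y) /eqP <- := H x.
  + apply/implyP => Hxy; apply/forallP => a; apply/forallP => a'.
    apply/implyP => /andP [/eqP Ea /eqP Ea'].
    by have /forallP /(_ a') /eqP -> := H a; rewrite Ea Ea'.
Qed.

Lemma auto_both (C : finType) (RC : rel C) (f : C -> C) : injective f ->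
  (forall a b, RC a b -> RC (f a) (f b)) -> forall a b, RC a b = RC (f a) (f b).
Proof.
move=> inj Hf a b; apply/idP/idP; first exact: Hf.
pose S := [set p : C * C | RC p.1 p.2].
pose F := fun p : C * C => (f p.1, f p.2).
have injF : injective F by move=> [x1 x2] [y1 y2] [/inj -> /inj ->].
have sub : F @: S \subset S.
  by apply/subsetP => q /imsetP [p]; rewrite inE => Hp ->; rewrite inE /=; apply: Hf.
have /eqP E : F @: S == S by rewrite eqEcard sub (card_imset _ injF) leqnn.
move=> Hfab; have : (f a, f b) \in F @: S by rewrite E inE.
case/imsetP => -[x y]; rewrite inE /= => Hxy [/inj -> /inj ->] //.
Qed.

Lemma sym_iso (C : finType) (RC : rel C) :
  #|[pred f : {ffun C -> C} | bijb f && increasing RC RC f]| = #|IsoSet RC RC|.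
Proof.
apply: eq_card => f; rewrite !inE; apply: andb_id2l => /andP [/injectiveP inj _].
apply/forallP/forallP => H a.
- apply/forallP => b; apply/eqP; apply: auto_both => // x y Hxy.
  by have /forallP /(_ y) /implyP := H x; apply.
- apply/forallP => b; apply/implyP => Hab.
  by have /forallP /(_ b) /eqP <- := H a.
Qed.
Set Implicit Arguments. Unset Strict Implicit.

Lemma iso_count u s n (R : nat -> nat -> bool) : nv u = n -> isoR n (ancN u) R ->
  #|IsoSet (@anc s) (fun i j : 'I_n => R i j)| = np_iso u s * sym s.
Proof.
move=> En [f [g [n0 [Hf [Hg [Hgf [Hfg [f0 HR]]]]]]]].
have Hu (a : V u) : a < n by rewrite -En; exact: ltn_ord.
pose k (a : V u) : 'I_n := Ordinal (Hf a (Hu a)).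
have Hg' (i : 'I_n) : g i < nv u by rewrite En; apply: Hg.
pose k' (i : 'I_n) : V u := Ordinal (Hg' i).
have kK : cancel k k' by move=> a; apply: val_inj; rewrite /= Hgf.
have k'K : cancel k' k by move=> i; apply: val_inj; rewrite /= Hfg.
rewrite -(@transport _ _ _ (@anc s) (@anc u) _ k k') //; last first.
  by move=> x y; rewrite /anc /vtx -/(ancN u x y) HR.
case Hnp: (np_iso u s) => /=.
- move/existsP: Hnp => [h /and3P [Hb Hi Hv]].
  have := incr_inv_iff (@anc u) (@anc s) h; rewrite Hi Hv /= => /esym /forallP Hh.
  case: (bijb_inv Hb) => h' [hK h'K].
  rewrite mul1n (@transport _ _ _ (@anc s) (@anc u) (@anc s) h h') //; last first.
    by move=> x y; have /forallP /(_ y) /eqP := Hh x.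
  by rewrite /sym sym_iso.
- rewrite mul0n; apply/eqP; rewrite eqn0Ngt; apply/negP => /card_gt0P [phi].
  rewrite inE => /andP [Hb /forallP Hphi].
  case: (bijb_inv Hb) => psi [pK sK].
  move/negbT/negP: Hnp; apply; rewrite /np_iso; apply/existsP; exists [ffun x => psi x].
  rewrite incr_inv_iff (@bijbP _ _ _ phi) /=; last 2 first.
  + by move=> x; rewrite ffunE.
  + by move=> x; rewrite ffunE.
  apply/forallP => a; apply/forallP => b; rewrite !ffunE.
  by have /forallP /(_ (psi b)) /eqP -> := Hphi (psi a); rewrite !sK.
Qed.

Lemma vtx_inj t : injective (vtx t).
Proof.
move=> a b E; apply: val_inj; apply/eqP.
by rewrite -(nth_uniq [::] (ltn_ord a) (ltn_ord b) (verts_uniq t)); apply/eqP.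
Qed.

Lemma lllE t (i j : V t) : lll t i j = (i < j).
Proof. by rewrite /lll /vtx !index_uniq ?verts_uniq. Qed.

Definition Rphi s t (phi : {ffun V s -> V t}) : nat -> nat -> bool :=
  fun i j => [exists a, exists b, [&& nat_of_ord (phi a) == i, nat_of_ord (phi b) == j & anc s a b]].

Lemma Rphi_val s t (phi : {ffun V s -> V t}) a b : injective phi -> Rphi phi (phi a) (phi b) = anc s a b.
Proof.
move=> inj; apply/existsP/idP => [[a' /existsP [b' /and3P [/eqP E1 /eqP E2 H]]]|H].
- have Ea : a' = a by apply: inj; apply: val_inj.
  have Eb : b' = b by apply: inj; apply: val_inj.
  by rewrite -Ea -Eb.
- by exists a; apply/existsP; exists b; rewrite !eqxx H.
Qed.

Lemma bijb_surj s t (phi : {ffun V s -> V t}) i : bijb phi -> i < nv t -> exists a, nat_of_ord (phi a) = i.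
Proof.
move=> /andP [_ /forallP H] Hi; have /existsP [a /eqP Ea] := H (Ordinal Hi).
by exists a; rewrite Ea.
Qed.

Lemma valid_good s t (phi : {ffun V s -> V t}) : bijb phi ->
  increasing (@anc s) (@lll t) phi -> inv_increasing (@anc t) (@anc s) phi ->
  Good (nv t) t (Rphi phi).
Proof.
move=> Hb /forallP Hi /forallP Hv.
have inj : injective phi by case/andP: Hb => /injectiveP.
split; [|split; [|split]].
- move=> i j k Hi' Hj Hk.
  case: (bijb_surj Hb Hi') => a <-; case: (bijb_surj Hb Hj) => b <-; case: (bijb_surj Hb Hk) => c <-.
  rewrite !Rphi_val //; exact: sp_trans.
- move=> i j k Hi' Hj Hk.
  case: (bijb_surj Hb Hi') => a <-; case: (bijb_surj Hb Hj) => b <-; case: (bijb_surj Hb Hk) => c <-.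
  rewrite !Rphi_val // => H1 H2; case/or3P: (@sp_chain _ _ _ H1 H2) => [/eqP E|H|H].
  + by rewrite (vtx_inj E) eqxx.
  + by apply/or3P; apply: Or32.
  + by apply/or3P; apply: Or33.
- move=> i j Hi' Hj.
  case: (bijb_surj Hb Hi') => a <-; case: (bijb_surj Hb Hj) => b <-.
  rewrite Rphi_val // => H.
  have /forallP /(_ (phi b)) /implyP /(_ H) /forallP /(_ a) /forallP /(_ b) /implyP := Hv (phi a).
  by apply; rewrite !eqxx.
- move=> i j Hi' Hj.
  case: (bijb_surj Hb Hi') => a <-; case: (bijb_surj Hb Hj) => b <-.
  rewrite Rphi_val // => H.
  by have /forallP /(_ b) /implyP /(_ H) := Hi a; rewrite lllE.
Qed.

Lemma eq_iso s t (phi : {ffun V s -> V t}) (R : nat -> nat -> bool) : bijb phi ->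
  eqR (nv t) R (Rphi phi) = [forall a, forall b, anc s a b == R (phi a) (phi b)].
Proof.
move=> Hb; have inj : injective phi by case/andP: Hb => /injectiveP.
apply/eqRP/forallP => [H a|H i j Hi Hj].
- by apply/forallP => b; rewrite H // Rphi_val.
- case: (bijb_surj Hb Hi) => a <-; case: (bijb_surj Hb Hj) => b <-.
  by rewrite Rphi_val //; have /forallP /(_ b) /eqP -> := H a.
Qed.

Lemma eq_valid s t (phi : {ffun V s -> V t}) (R : nat -> nat -> bool) : bijb phi ->
  Good (nv t) t R -> eqR (nv t) R (Rphi phi) ->
  increasing (@anc s) (@lll t) phi && inv_increasing (@anc t) (@anc s) phi.
Proof.
move=> Hb [_ [_ [A L]]]; rewrite eq_iso // => /forallP H.
apply/andP; split; apply/forallP => x; apply/forallP => y.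
- apply/implyP => Hxy; rewrite lllE; apply: L => //.
  by have /forallP /(_ y) /eqP <- := H x.
- apply/implyP => Hxy; apply/forallP => a; apply/forallP => a'.
  apply/implyP => /andP [/eqP Ea /eqP Ea'].
  have /forallP /(_ a') /eqP -> := H a; rewrite Ea Ea'; exact: A.
Qed.
Set Implicit Arguments. Unset Strict Implicit.

Lemma card_sum (T : finType) (P : {pred T}) : #|P| = \sum_(x : T) (x \in P : nat).
Proof. by rewrite -sum1_card big_mkcond; apply: eq_bigr => x _; case: (x \in P). Qed.

Lemma sum_andb_count T (b : bool) (P : pred T) (L : seq T) :
  \sum_(x <- L) ((b && P x) : nat) = b * count P L.
Proof.
elim: L => [|x L IH]; first by rewrite big_nil muln0.
by rewrite big_cons IH /= mulnDr; case: (b); case: (P x).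
Qed.

Lemma sum_count T (P : pred T) (L : seq T) : \sum_(x <- L) (P x : nat) = count P L.
Proof. by elim: L => [|x L IH]; rewrite ?big_nil ?big_cons ?IH. Qed.

Lemma sum_allp T (F G : T -> nat) (L : seq T) : allp (fun x => F x = G x) L ->
  \sum_(x <- L) F x = \sum_(x <- L) G x.
Proof. elim: L => [|x L IH]; first by rewrite !big_nil. by move=> [H1 H2]; rewrite !big_cons H1 IH. Qed.

Lemma allp_impl T (P Q : T -> Prop) L : (forall x, P x -> Q x) -> allp P L -> allp Q L.
Proof. by move=> H; elim: L => [|x L IH] //= [H1 H2]; split; auto. Qed.

Lemma key s t : btilde s t = alpha s t * sym s.
Proof.
have [L [E A C]] := main t.
pose valid (phi : {ffun V s -> V t}) :=
  [&& bijb phi, increasing (@anc s) (@lll t) phi & inv_increasing (@anc t) (@anc s) phi].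
have -> : btilde s t = \sum_phi (valid phi : nat) by rewrite /btilde card_sum.
transitivity (\sum_phi \sum_(x <- L) ((valid phi && eqR (nv t) x.2 (Rphi phi)) : nat)).
  apply: eq_bigr => phi _; rewrite sum_andb_count.
  case V: (valid phi); rewrite ?mul0n ?mul1n //.
  case/and3P: V => Hb Hi Hv; rewrite C //; exact: valid_good.
rewrite exchange_big /=.
transitivity (\sum_(x <- L) (np_iso x.1 s * sym s)).
  apply: sum_allp; apply: (allp_impl _ A) => x [Hn [Hiso Hg]].
  rewrite -(iso_count s Hn Hiso) card_sum; apply: eq_bigr => phi _.
  rewrite inE; congr nat_of_bool.
  case Hb: (bijb phi) => /=; last by rewrite /valid Hb.
  rewrite -eq_iso //; apply/idP/idP => [/andP [] //|H].
  by rewrite /valid Hb (eq_valid Hb Hg H).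
rewrite -big_distrl /= sum_count /alpha -E count_map.
by [].
Qed.

Local Open Scope ring_scope.

Theorem theorem2p4 (tau s : ptree) :
  (alpha s tau)%:R = (btilde s tau)%:R / (sym s)%:R :> rat.
Proof.
have Hs : (0 < sym s)%N.
  apply/card_gt0P; exists [ffun x => x]; rewrite inE.
  rewrite (@bijbP _ _ _ id) /=; try by move=> x; rewrite ?ffunE.
  by apply/forallP => a; apply/forallP => b; apply/implyP; rewrite !ffunE.
rewrite key GRing.natrM GRing.mulfK // Num.Theory.pnatr_eq0 -lt0n Hs.
by [].
Qed.
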